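(* Let $\mathbb{F}$ be a field, $n\ge1$ and $k\ge2$. For every flag $\mathcal{F}$ in $\mathbb{F}^n$ of length $k$, the semigroup $\varphi(\mathcal{F})$ is a $k$-maximal nilpotent subsemigroup of $M(n,\mathbb{F})$. Conversely, every $k$-maximal nilpotent subsemigroup of $M(n,\mathbb{F})$ equals $\varphi(\mathcal{F})$ for some flag $\mathcal{F}$ in $\mathbb{F}^n$ of length $k$.
   Context: $M(n,\mathbb{F})$ is the semigroup of $n\times n$ matrices over $\mathbb{F}$ under multiplication, identified with linear operators on $\mathbb{F}^n$. A flag in $\mathbb{F}^n$ of length $k$ is a chain of subspaces $0=V_0\subsetneq V_1\subsetneq\cdots\subsetneq V_k=\mathbb{F}^n$, and $\varphi(\mathcal{F})=\{a\in M(n,\mathbb{F}) : a(V_i)\subseteq V_{i-1}\text{ for all } i=1,\dots,k\}$. A semigroup $S$ with zero $0$ is nilpotent of nilpotency degree $k$ if $a_1\cdots a_k=0$ for all $a_j\in S$ and some product $b_1\cdots b_{k-1}$ of elements of $S$ is nonzero. A nilpotent subsemigroup of $M(n,\mathbb{F})$ of nilpotency degree $k$ is $k$-maximal if it is not properly contained in any other nilpotent subsemigroup of $M(n,\mathbb{F})$ of nilpotency degree $k$. *)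

(* Defs.v *)
From HB Require Import structures.
From mathcomp Require Import all_boot all_order all_algebra.
Set Implicit Arguments. Unset Strict Implicit. Unset Printing Implicit Defensive.
Import GRing.Theory.
Local Open Scope ring_scope.

(* M(n,F) for n >= 1 is modelled as 'M[F]_n.+1 (a ring).  Vectors of F^n are
   row vectors; a matrix a acts by v |-> v *m a, and subspaces of F^n are
   represented by row spaces of square matrices (mxalgebra, scope %MS). *)

Definition is_flag (F : fieldType) (n : nat) (V : nat -> 'M[F]_n.+1) (k : nat) : Prop :=
  (V 0%N == (0 : 'M[F]_n.+1))%MS /\ (V k == 1%:M)%MS /\ (forall i, (i < k)%N -> (V i < V i.+1)%MS).

Definition phi (F : fieldType) (n : nat) (V : nat -> 'M[F]_n.+1) (k : nat)
  (a : 'M[F]_n.+1) : Prop :=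
  forall i, (0 < i <= k)%N -> (V i *m a <= V i.-1)%MS.

Definition subsemigroup (F : fieldType) (n : nat) (S : 'M[F]_n.+1 -> Prop) :=
  forall a b, S a -> S b -> S (a * b).

Definition nilpotent_of_degree (F : fieldType) (n : nat)
  (S : 'M[F]_n.+1 -> Prop) (k : nat) : Prop :=
  [/\ subsemigroup S, S 0,
      (forall a : 'I_k -> 'M[F]_n.+1, (forall i, S (a i)) -> \prod_(i < k) a i = 0)
    & exists b : 'I_k.-1 -> 'M[F]_n.+1, (forall i, S (b i)) /\ \prod_(i < k.-1) b i != 0].

Definition k_maximal (F : fieldType) (n : nat) (S : 'M[F]_n.+1 -> Prop) (k : nat) : Prop :=
  nilpotent_of_degree S k /\
  forall T : 'M[F]_n.+1 -> Prop, nilpotent_of_degree T k ->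
    (forall a, S a -> T a) -> forall a, T a -> S a.

(* Main.v *)
Require Import Defs.
From mathcomp Require Import all_boot all_order all_algebra.
From mathcomp Require Import zify.
From Stdlib Require Import Classical ClassicalEpsilon.

Set Implicit Arguments. Unset Strict Implicit. Unset Printing Implicit Defensive.
Import GRing.Theory.
Local Open Scope ring_scope.

Lemma mulmx_ring (F : fieldType) n (A B : 'M[F]_n.+1) : A * B = A *m B.
Proof. by rewrite mulmxE. Qed.

Lemma not_sub_row (F : fieldType) m p n (A : 'M[F]_(m,n)) (B : 'M[F]_(p,n)) :
  ~~ (A <= B)%MS -> exists r, ~~ (row r A <= B)%MS.
Proof.
move=> h; case: (pickP (fun r => ~~ (row r A <= B)%MS)) => [r Hr|H]; first by exists r.
by case/negP: h; apply/row_subP => r; move: (H r) => /negbFE.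
Qed.

Lemma flag_mono (F : fieldType) n (V : nat -> 'M[F]_n.+1) k : is_flag V k ->
  forall i j, (i <= j)%N -> (j <= k)%N -> (V i <= V j)%MS.
Proof.
case=> _ [_ hs] i j; elim: j => [|j IH].
  by rewrite leqn0 => /eqP -> _.
rewrite leq_eqVlt => /orP [/eqP -> //| hij] hj.
apply: submx_trans (IH hij (ltnW hj)) _. by apply: ltmxW; apply: hs.
Qed.

Lemma flag0 (F : fieldType) n (V : nat -> 'M[F]_n.+1) k : is_flag V k -> V 0%N = 0.
Proof. by case=> [/andP[h _] _]; apply/eqP; rewrite -submx0. Qed.

Lemma flag_new (F : fieldType) n (V : nat -> 'M[F]_n.+1) k q : is_flag V k -> (q < k)%N ->
  exists z : 'rV[F]_n.+1, (z <= V q.+1)%MS /\ ~~ (z <= V q)%MS.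
Proof.
case=> _ [_ hs] hq; move: (hs q hq); rewrite ltmxE => /andP[_ h].
by have [r hr] := not_sub_row h; exists (row r (V q.+1)); rewrite row_sub.
Qed.

Lemma phi_step (F : fieldType) n (V : nat -> 'M[F]_n.+1) k a j : is_flag V k ->
  phi V k a -> (j <= k)%N -> (V j *m a <= V j.-1)%MS.
Proof.
move=> fl ha; case: j => [_|j hj]; first by rewrite (flag0 fl) mul0mx sub0mx.
by apply: ha.
Qed.

Lemma prod_sub (F : fieldType) n (V : nat -> 'M[F]_n.+1) k : is_flag V k ->
  forall s : seq 'M[F]_n.+1, (forall a, a \in s -> phi V k a) ->
  forall j, (j <= k)%N -> (V j *m \prod_(a <- s) a <= V (j - size s)%N)%MS.
Proof.
move=> fl; elim=> [|a s IH] hs j hj.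
  by rewrite big_nil mulmx1 subn0.
rewrite big_cons mulmx_ring mulmxA.
apply: submx_trans (submxMr _ (phi_step fl (hs a (mem_head _ _)) hj)) _.
have -> : (j - size (a :: s) = j.-1 - size s)%N by rewrite /=; lia.
apply: IH; last by lia.
by move=> b hb; apply: hs; rewrite in_cons hb orbT.
Qed.

Lemma list2ord (F : fieldType) n m (s : seq 'M[F]_n.+1) : size s = m ->
  \prod_(i < m) nth 0 s i = \prod_(x <- s) x.
Proof. by move=> <-; rewrite (big_nth 0) big_mkord. Qed.

Lemma ord2list (F : fieldType) n m (a : 'I_m -> 'M[F]_n.+1) :
  \prod_(i < m) a i = \prod_(x <- [seq a i | i <- index_enum 'I_m]) x.
Proof. by rewrite big_map. Qed.

Lemma size_ie m : size (index_enum 'I_m) = m.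
Proof. by rewrite -(filter_predT (index_enum _)) deprecated_filter_index_enum -cardE card_ord. Qed.

Lemma onestep (F : fieldType) n (V : nat -> 'M[F]_n.+1) k q (z x : 'rV[F]_n.+1) :
  is_flag V k -> (q <= k)%N -> ~~ (z <= V q)%MS -> (x <= V q)%MS ->
  exists a, phi V k a /\ z *m a = x.
Proof.
move=> fl hq hz hx.
set c := z *m cokermx (V q).
have c0 : c != 0 by rewrite /c -submxE.
have [j hj] : exists j, c 0 j != 0.
  case: (pickP (fun j => c 0 j != 0)) => [j Hj|H]; first by exists j.
  case/eqP: c0; apply/matrixP => i j; rewrite ord1 [in RHS]mxE; apply/eqP; exact: negbFE (H j).
exists (cokermx (V q) *m ((c 0 j)^-1 *: delta_mx j 0) *m x); split.
  move=> i /andP [hi0 hik].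
  case: (leqP i q) => hiq.
    have : (V i <= V q)%MS := flag_mono fl hiq hq.
    rewrite submxE => /eqP h0. by rewrite 2!mulmxA h0 !mul0mx sub0mx.
  rewrite mulmxA. apply: submx_trans (submxMl _ _) _.
  apply: submx_trans hx (flag_mono fl _ _); lia.
have hcol : col j c = (c 0 j)%:M by rewrite [LHS]mx11_scalar mxE.
rewrite 2!mulmxA -/c -scalemxAr -colE hcol.
by rewrite scale_scalar_mx mulVf // mul_scalar_mx scale1r.
Qed.

Lemma descend (F : fieldType) n (V : nat -> 'M[F]_n.+1) k (fl : is_flag V k) p :
  (p <= k)%N -> forall x : 'rV[F]_n.+1, ~~ (x <= V p)%MS ->
  exists s, [/\ size s = p, (forall a, a \in s -> phi V k a) & x *m \prod_(a <- s) a != 0].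
Proof.
elim: p => [|p IH] hp x hx.
  exists [::]; split => //; rewrite big_nil mulmx1.
  by apply/negP => /eqP x0; move: hx; rewrite x0 sub0mx.
have [z [hz1 hz2]] := flag_new fl hp.
have [a [ha hxa]] := onestep fl hp hx hz1.
have [s [hs1 hs2 hs3]] := IH (ltnW hp) z hz2.
exists (a :: s); split => /=; first by rewrite hs1.
  by move=> b; rewrite in_cons => /orP[/eqP ->|]; [|apply: hs2].
by rewrite big_cons mulmx_ring mulmxA hxa.
Qed.

Lemma ascend (F : fieldType) n (V : nat -> 'M[F]_n.+1) k (fl : is_flag V k) r :
  forall q (x : 'rV[F]_n.+1), (x <= V q)%MS -> (q + r <= k)%N ->
  exists y s, [/\ size s = r, (forall a, a \in s -> phi V k a) & y *m \prod_(a <- s) a = x].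
Proof.
elim: r => [|r IH] q x hx hqr.
  by exists x, [::]; split => //; rewrite big_nil mulmx1.
have hq : (q < k)%N by lia.
have [z [hz1 hz2]] := flag_new fl hq.
have [a [ha hza]] := onestep fl (ltnW hq) hz2 hx.
have hq1 : (q.+1 + r <= k)%N by lia.
have [y [s [hs1 hs2 hs3]]] := IH q.+1 z hz1 hq1.
exists y, (s ++ [:: a]); split.
- by rewrite size_cat hs1 addn1.
- by move=> b; rewrite mem_cat in_cons in_nil orbF => /orP[/hs2|/eqP ->].
- by rewrite big_cat big_seq1 /= (mulmx_ring (\prod_(i <- s) i) a) mulmxA hs3.
Qed.

Lemma phi_nil (F : fieldType) n (V : nat -> 'M[F]_n.+1) k : (2 <= k)%N -> is_flag V k ->
  nilpotent_of_degree (phi V k) k.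
Proof.
move=> hk fl; split.
- move=> a b ha hb i /andP[hi0 hik]; rewrite mulmx_ring mulmxA.
  apply: submx_trans (submxMr _ (ha i _)) _; first by rewrite hi0 hik.
  apply: submx_trans (phi_step fl hb _) _; first by lia.
  by apply: (flag_mono fl); lia.
- by move=> i _; rewrite mulmx0 sub0mx.
- move=> a ha; rewrite ord2list; set s := [seq a i | i <- _].
  have hs : forall b, b \in s -> phi V k b by move=> b /mapP[i _ ->]; apply: ha.
  have := prod_sub fl hs (leqnn k).
  rewrite size_map size_ie subnn (flag0 fl) submx0 => /eqP h.
  case: fl => _ [/andP [_ h1] _].
  apply/eqP; rewrite -submx0 -(mul1mx (\prod_(x <- s) x)).
  by apply: submx_trans (submxMr _ h1) _; rewrite h.
- have hk1 : (k.-1 < k)%N by lia.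
  have [z [hz1 hz2]] := flag_new fl hk1.
  have [s [hs1 hs2 hs3]] := descend fl (ltnW hk1) hz2.
  exists (fun i : 'I_k.-1 => nth 0 s i); split.
    by move=> i; apply: hs2; apply: mem_nth; rewrite hs1.
  rewrite list2ord //; apply/eqP => h; move: hs3; by rewrite h mulmx0 eqxx.
Qed.

Lemma phi_max (F : fieldType) n (V : nat -> 'M[F]_n.+1) k : (2 <= k)%N -> is_flag V k ->
  forall T, nilpotent_of_degree T k -> (forall a, phi V k a -> T a) -> forall a, T a -> phi V k a.
Proof.
move=> hk fl T [_ T0 Tk _] hsub t ht i /andP [hi0 hik].
case: (boolP (V i *m t <= V i.-1)%MS) => // hn; exfalso.
have [r hr] := not_sub_row hn; rewrite row_mul in hr.
have e1 : (i + (k - i) <= k)%N by lia.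
have e2 : (i.-1 <= k)%N by lia.
have [y [s1 [hs1 hm1 hy]]] := ascend fl (row_sub r (V i)) e1.
have [s2 [hs2 hm2 hz]] := descend fl e2 hr.
set s := s1 ++ t :: s2.
have hsz : size s = k by rewrite size_cat /= hs1 hs2; lia.
have hT : forall j : 'I_k, T (nth 0 s j).
  move=> j; have : nth 0 s j \in s by apply: mem_nth; rewrite hsz.
  rewrite mem_cat in_cons => /orP[/hm1/hsub //|/orP[/eqP -> //|/hm2/hsub //]].
have := Tk _ hT; rewrite list2ord // => h.
have e : y *m \prod_(a <- s) a = row r (V i) *m t *m \prod_(a <- s2) a.
  by rewrite big_cat big_cons /= (mulmx_ring t) (mulmx_ring (\prod_(a <- s1) a)) !mulmxA hy.
by move: hz; rewrite -e h mulmx0 eqxx.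
Qed.

Lemma span_ex (F : fieldType) n (G : 'rV[F]_n.+1 -> Prop) : exists M : 'M[F]_n.+1,
  (forall v, G v -> (v <= M)%MS) /\
  (forall N : 'M[F]_n.+1, (forall v, G v -> (v <= N)%MS) -> (M <= N)%MS).
Proof.
pose gen (M : 'M[F]_n.+1) :=
  forall N : 'M[F]_n.+1, (forall v, G v -> (v <= N)%MS) -> (M <= N)%MS.
have step : forall M, gen M -> ~ (forall v, G v -> (v <= M)%MS) ->
    exists M' : 'M[F]_n.+1, (\rank M < \rank M')%N /\ gen M'.
  move=> M hM hn.
  have [v hv] := not_all_ex_not _ _ hn.
  have [hGv hvM] := imply_to_and _ _ hv.
  exists (M + v)%MS; split.
    have [le eqi] := mxrank_leqif_sup (addsmxSl M v).
    rewrite ltn_neqAle le andbT eqi; apply/negP => hs.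
    by apply: hvM; apply: submx_trans (addsmxSr M v) hs.
  by move=> N HN; rewrite addsmx_sub hM // HN.
suff: forall m (M : 'M[F]_n.+1), (n.+1 - \rank M <= m)%N -> gen M ->
  exists M : 'M[F]_n.+1, (forall v, G v -> (v <= M)%MS) /\ gen M.
  by move=> h; apply: (h n.+1 0) => //; [rewrite leq_subr | move=> N _; rewrite sub0mx].
elim=> [|m IH] M hr hM.
  case: (classic (forall v, G v -> (v <= M)%MS)) => hall; first by exists M.
  have [M' [hlt _]] := step M hM hall.
  have := rank_leq_col M'; lia.
case: (classic (forall v, G v -> (v <= M)%MS)) => hall; first by exists M.
have [M' [hlt hM']] := step M hM hall.
apply: (IH M') => //; lia.
Qed.

Definition gens (F : fieldType) n (S : 'M[F]_n.+1 -> Prop) (j : nat) (v : 'rV[F]_n.+1) : Prop :=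
  exists (y : 'rV[F]_n.+1) (s : seq 'M[F]_n.+1),
    [/\ size s = j, (forall a, a \in s -> S a) & v = y *m \prod_(a <- s) a].

Lemma converse (F : fieldType) n k (S : 'M[F]_n.+1 -> Prop) : (2 <= k)%N ->
  nilpotent_of_degree S k ->
  exists V : nat -> 'M[F]_n.+1, is_flag V k /\ forall a, S a -> phi V k a.
Proof.
move=> hk [_ S0 Sk [b [hb hb0]]].
have hW : forall j, exists M : 'M[F]_n.+1, (forall v, gens S j v -> (v <= M)%MS) /\
  (forall N : 'M[F]_n.+1, (forall v, gens S j v -> (v <= N)%MS) -> (M <= N)%MS)
  by move=> j; apply: span_ex.
pose W j := proj1_sig (constructive_indefinite_description _ (hW j)).
have HW j : (forall v, gens S j v -> (v <= W j)%MS) /\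
   (forall N : 'M[F]_n.+1, (forall v, gens S j v -> (v <= N)%MS) -> (W j <= N)%MS)
  := proj2_sig (constructive_indefinite_description _ (hW j)).
have gin j v : gens S j v -> (v <= W j)%MS := (HW j).1 v.
have wmin j N : (forall v, gens S j v -> (v <= N)%MS) -> (W j <= N)%MS := (HW j).2 N.
clearbody W.
have W0 : (1%:M <= W 0%N)%MS.
  apply/row_subP => r; apply: gin; exists (row r 1%:M), [::]; split => //.
  by rewrite big_nil mulmx1.
have Wk : (W k <= (0 : 'M[F]_n.+1))%MS.
  apply: wmin => v [y [s [hs hm ->]]].
  have hT : forall j : 'I_k, S (nth 0 s j).
    by move=> j; apply: hm; apply: mem_nth; rewrite hs.
  by have := Sk _ hT; rewrite list2ord // => ->; rewrite mulmx0 sub0mx.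
have L m a : S a -> (W m *m a <= W m.+1)%MS.
  move=> ha.
  have : (W m <= kermx (a *m cokermx (W m.+1)))%MS.
    apply: wmin => v [y [s [hs hm ->]]].
    rewrite sub_kermx mulmxA -submxE; apply: gin.
    exists y, (s ++ [:: a]); split.
    - by rewrite size_cat hs addn1.
    - by move=> c; rewrite mem_cat in_cons in_nil orbF => /orP[/hm|/eqP ->].
    - by rewrite big_cat big_seq1 /= (mulmx_ring (\prod_(i <- s) i) a) mulmxA.
  by rewrite sub_kermx mulmxA -submxE.
have D m : (W m.+1 <= W m)%MS.
  apply: wmin => v [y [s [hs hm ->]]].
  case: s hs hm => [//|a s] hs hm.
  apply: gin; exists (y *m a), s; split.
  - by case: hs.
  - by move=> c hc; apply: hm; rewrite in_cons hc orbT.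
  - by rewrite big_cons (mulmx_ring a) mulmxA.
have D' i j : (i <= j)%N -> (W j <= W i)%MS.
  move=> /subnK <-; elim: (j - i)%N => [|d IH]; first by rewrite add0n.
  by apply: submx_trans (D _) IH.
have Wk1 : ~~ (W k.-1 <= (0 : 'M[F]_n.+1))%MS.
  set s := [seq b i | i <- index_enum 'I_k.-1].
  have P0 : \prod_(x <- s) x != 0 by rewrite -ord2list.
  have [r hr] : exists r, ~~ (row r (\prod_(x <- s) x) <= (0 : 'M[F]_n.+1))%MS.
    by apply: not_sub_row; rewrite submx0.
  apply/negP => h.
  have hx : (row r (\prod_(x <- s) x) <= W k.-1)%MS.
    apply: gin; exists (row r 1%:M), s; split.
    - by rewrite size_map size_ie.
    - by move=> c /mapP[i _ ->].
    - by rewrite -row_mul mul1mx.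
  by move: hr; rewrite (submx_trans hx h).
have strict j : (j < k)%N -> ~~ (W j <= W j.+1)%MS.
  move=> hj; apply/negP => h.
  have prop : forall d : nat, (W (j + d)%N <= W (j + d)%N.+1)%MS.
    elim=> [|d IH]; first by rewrite addn0.
    rewrite addnS; apply: wmin => v [y [s [hs hm ->]]].
    case/lastP: s hs hm => [|s a] hs hm; first by [].
    have ha : S a by apply: hm; rewrite mem_rcons mem_head.
    rewrite -cats1 big_cat big_seq1 /= (mulmx_ring (\prod_(i <- s) i) a) mulmxA.
    apply: submx_trans (L _ a ha).
    apply: submxMr; apply: submx_trans IH; apply: gin; exists y, s; split => //.
    - by move: hs; rewrite size_rcons => -[].
    - by move=> c hc; apply: hm; rewrite mem_rcons in_cons hc orbT.
  have chain : forall d : nat, (W j <= W (j + d)%N)%MS.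
    elim=> [|d IH]; first by rewrite addn0.
    by rewrite addnS; apply: submx_trans IH (prop d).
  have := chain (k - j)%N; rewrite subnKC ?(ltnW hj) // => hjk.
  have hj1 : (j <= k.-1)%N by lia.
  by move: Wk1; rewrite (submx_trans (D' _ _ hj1) (submx_trans hjk Wk)).
exists (fun i => W (k - i)%N); split.
  split; [|split].
  - by rewrite subn0; apply/andP; split; [exact: Wk | exact: sub0mx].
  - by rewrite subnn; apply/andP; split; [exact: submx1 | exact: W0].
  - move=> i hi; rewrite ltmxE -(subnSK hi) D /=; apply: strict; lia.
move=> a ha i /andP[hi0 hik].
have -> : (k - i.-1 = (k - i).+1)%N by lia.
exact: L.
Qed.

Theorem proposition8 (F : fieldType) (n k : nat) (hk : (2 <= k)%N) :
  (forall V : nat -> 'M[F]_n.+1, is_flag V k -> k_maximal (phi V k) k) /\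
  (forall S : 'M[F]_n.+1 -> Prop, k_maximal S k ->
     exists V : nat -> 'M[F]_n.+1, is_flag V k /\ forall a, S a <-> phi V k a).
Proof.
split.
  move=> V fl; split; first exact: phi_nil.
  exact: phi_max.
move=> S [hnil hmax].
have [V [fl hsub]] := converse hk hnil.
exists V; split => // a; split; first exact: hsub.
exact: hmax (phi_nil hk fl) hsub a.
Qed.
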